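(* Let $\mathcal{H},\mathcal{K}$ be real or complex Hilbert spaces and let $S:\mathcal{H}\to\mathcal{K}$ and $T:\mathcal{K}\to\mathcal{H}$ be (not necessarily densely defined) surjective linear operators such that $$\langle Sx,y\rangle=\langle x,Ty\rangle\qquad \text{for all } x\in\operatorname{dom} S,\ y\in\operatorname{dom} T.$$ Then $S$ and $T$ are both densely defined operators such that $S^*=T$ and $T^*=S$.
   Context: Linear operators are defined on linear subspaces $\operatorname{dom}$ of the respective space; surjective means the range is the whole target space. *)

(* Defs.v *)
From HB Require Import structures.
From mathcomp Require Import all_boot all_order all_algebra complex.
From mathcomp Require Import reals.
Set Implicit Arguments. Unset Strict Implicit. Unset Printing Implicit Defensive.
Import Order.TTheory GRing.Theory Num.Theory.
Local Open Scope ring_scope.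

Definition scal (R : realType) (is_complex : bool) : numFieldType :=
  if is_complex return numFieldType then (R[i] : numClosedFieldType) else (R : numFieldType).

Definition sconj (R : realType) (b : bool) : scal R b -> scal R b :=
  match b return scal R b -> scal R b with
  | true => fun z : R[i] => conjc z
  | false => fun x : R => x
  end.

Definition inner_product (R : realType) (b : bool) (V : lmodType (scal R b))
    (ip : V -> V -> scal R b) : Prop :=
  [/\ (forall (a : scal R b) (x y z : V), ip (a *: x + y) z = a * ip x z + ip y z),
      (forall x y : V, ip x y = sconj (ip y x)),
      (forall x : V, 0 <= ip x x) &
      (forall x : V, ip x x = 0 -> x = 0)].

(* Completeness w.r.t. the norm ||x|| = sqrt <x,x> (we compare <x,x> with
   positive scalars, which is equivalent to comparing norms). *)
Definition ip_complete (R : realType) (b : bool) (V : lmodType (scal R b))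
    (ip : V -> V -> scal R b) : Prop :=
  forall u : nat -> V,
    (forall e : scal R b, 0 < e -> exists N : nat, forall m n : nat,
        (N <= m)%N -> (N <= n)%N -> ip (u m - u n) (u m - u n) < e) ->
    exists l : V, forall e : scal R b, 0 < e -> exists N : nat, forall n : nat,
        (N <= n)%N -> ip (u n - l) (u n - l) < e.

Definition hilbert (R : realType) (b : bool) (V : lmodType (scal R b))
    (ip : V -> V -> scal R b) : Prop :=
  inner_product ip /\ ip_complete ip.

(* A linear operator from V to W: a domain D (a linear subspace of V) and a map
   f, linear on D (values of f outside D are irrelevant). *)
Definition linear_operator (K : numFieldType) (V W : lmodType K)
    (D : V -> Prop) (f : V -> W) : Prop :=
  [/\ D 0,
      (forall (a : K) (x y : V), D x -> D y -> D (a *: x + y)) &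
      (forall (a : K) (x y : V), D x -> D y -> f (a *: x + y) = a *: f x + f y)].

Definition op_surjective (K : numFieldType) (V W : lmodType K)
    (D : V -> Prop) (f : V -> W) : Prop :=
  forall w : W, exists2 x, D x & f x = w.

Definition densely_defined (K : numFieldType) (V : lmodType K)
    (ip : V -> V -> K) (D : V -> Prop) : Prop :=
  forall (x : V) (e : K), 0 < e -> exists2 d, D d & ip (x - d) (x - d) < e.

(* The graph of the adjoint S^* : W -> V of (DS, S) : V -> W:
   (y, z) is in the graph iff <S x, y> = <x, z> for all x in dom S. *)
Definition adjoint_graph (K : numFieldType) (V W : lmodType K)
    (ipV : V -> V -> K) (ipW : W -> W -> K)
    (DS : V -> Prop) (S : V -> W) (y : W) (z : V) : Prop :=
  forall x : V, DS x -> ipW (S x) y = ipV x z.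

Definition is_adjoint (K : numFieldType) (V W : lmodType K)
    (ipV : V -> V -> K) (ipW : W -> W -> K)
    (DS : V -> Prop) (S : V -> W) (DT : W -> Prop) (T : W -> V) : Prop :=
  forall (y : W) (z : V), adjoint_graph ipV ipW DS S y z <-> (DT y /\ T y = z).

(* Main.v *)
Require Import Defs.
From HB Require Import structures.
From mathcomp Require Import all_boot all_order all_algebra complex.
From mathcomp Require Import classical_sets boolp reals.
From mathcomp Require Import ring lra.
Import Order.TTheory GRing.Theory Num.Theory archimedean.Num.Theory.
Local Open Scope ring_scope.
Section S.
Variable R : realType.
Definition emb (b : bool) : R -> scal R b :=
  match b return R -> scal R b with
  | true => fun r : R => (r%:C)%C
  | false => fun r : R => r
  end.
Definition re {b : bool} : scal R b -> R :=
  match b return scal R b -> R with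
  | true => fun z : R[i] => complex.Re z
  | false => fun r : R => r
  end.
Lemma embD b (x y : R) : emb b (x + y) = emb b x + emb b y.
Proof. case: b => //=. by rewrite rmorphD. Qed.
Lemma embM b (x y : R) : emb b (x * y) = emb b x * emb b y.
Proof. case: b => //=. by rewrite rmorphM. Qed.
Lemma embN b (x : R) : emb b (- x) = - emb b x.
Proof. case: b => //=. by rewrite rmorphN. Qed.
Lemma emb_nat b n : emb b n%:R = n%:R.
Proof. case: b => //=. by rewrite rmorph_nat. Qed.
Lemma emb_le b (x y : R) : (emb b x <= emb b y) = (x <= y).
Proof. case: b => //=. by rewrite lecR. Qed.
Lemma emb_lt b (x y : R) : (emb b x < emb b y) = (x < y).
Proof. case: b => //=. by rewrite ltcR. Qed.
Lemma emb_re b (a : scal R b) : 0 <= a -> emb b (re a) = a.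
Proof. move: a; case: b => //= -[x y]; rewrite lecE /= => /andP[/eqP -> _]. done. Qed.
Lemma sconjD b (x y : scal R b) : sconj (x + y) = sconj x + sconj y.
Proof. move: x y; case: b => //= x y. by rewrite rmorphD. Qed.
Lemma sconjM b (x y : scal R b) : sconj (x * y) = sconj x * sconj y.
Proof. move: x y; case: b => //= x y. by rewrite rmorphM. Qed.
Lemma sconjN b (x : scal R b) : sconj (- x) = - sconj x.
Proof. move: x; case: b => //= x. by rewrite rmorphN. Qed.
Lemma sconjK b (x : scal R b) : sconj (sconj x) = x.
Proof. move: x; case: b => //= x. by rewrite conjcK. Qed.
Lemma sconj_emb b (r : R) : sconj (emb b r) = emb b r.
Proof. case: b => //=. exact: conjc_real. Qed.
Lemma conj_add_real b (a : scal R b) : emb b (re (a + sconj a)) = a + sconj a.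
Proof. move: a; case: b => //= -[x y] /=. simpc. done. Qed.
Lemma mul_conj_ge0 b (a : scal R b) : 0 <= a * sconj a.
Proof. move: a; case: b => /= [[x y]|a]; last by rewrite -expr2 sqr_ge0. simpc. by rewrite mulrC addNr eqxx addr_ge0 // -expr2 sqr_ge0. Qed.
Lemma mul_conj_eq0 b (a : scal R b) : a * sconj a = 0 -> a = 0.
Proof. move: a; case: b => /= a /eqP; rewrite mulf_eq0 ?conjc_eq0 ?orbb => /eqP //. Qed.
Lemma emb0 b : emb b 0 = 0. Proof. exact: (emb_nat b 0). Qed.
Lemma emb1 b : emb b 1 = 1. Proof. by case: b => //=. Qed.
Lemma sconj1 b : sconj (1 : scal R b) = 1.
Proof. by have := sconj_emb b 1; rewrite (emb_nat b 1). Qed.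
Lemma emb_inj b (x y : R) : emb b x = emb b y -> x = y.
Proof. by move=> e; apply/eqP; rewrite eq_le -!(emb_le b) e lexx. Qed.

Lemma sconj0 b : sconj (0 : scal R b) = 0.
Proof. by case: b => //=; exact: conjc0. Qed.

Variable b : bool.
Variable V : lmodType (scal R b).
Variable ip : V -> V -> scal R b.
Hypothesis hip : inner_product ip.

Lemma ipDl x y z : ip (x + y) z = ip x z + ip y z.
Proof. by case: hip => h _ _ _; rewrite -{1}[x]scale1r h mul1r. Qed.
Lemma ip0l z : ip 0 z = 0.
Proof. by apply/(addrI (ip 0 z)); rewrite -ipDl !addr0. Qed.
Lemma ipZl a x z : ip (a *: x) z = a * ip x z.
Proof. by case: hip => h _ _ _; rewrite -[a *: x]addr0 h ip0l addr0. Qed.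
Lemma ipNl x z : ip (- x) z = - ip x z.
Proof. by rewrite -scaleN1r ipZl mulN1r. Qed.
Lemma ipBl x y z : ip (x - y) z = ip x z - ip y z.
Proof. by rewrite ipDl ipNl. Qed.
Lemma ipC x y : ip x y = sconj (ip y x).
Proof. by case: hip => _ h _ _; apply: h. Qed.
Lemma ipDr x y z : ip z (x + y) = ip z x + ip z y.
Proof. by rewrite ipC ipDl sconjD -!ipC. Qed.
Lemma ipZr a x z : ip z (a *: x) = sconj a * ip z x.
Proof. by rewrite ipC ipZl sconjM -ipC. Qed.
Lemma ipNr x z : ip z (- x) = - ip z x.
Proof. by rewrite ipC ipNl sconjN -ipC. Qed.
Lemma ipBr x y z : ip z (x - y) = ip z x - ip z y.
Proof. by rewrite ipDr ipNr. Qed.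
Lemma ip0r z : ip z 0 = 0.
Proof. by rewrite ipC ip0l sconj0. Qed.
Lemma ip_ge0 x : 0 <= ip x x. Proof. by case: hip => _ _ h _; apply: h. Qed.
Lemma ip_eq0 x : ip x x = 0 -> x = 0. Proof. by case: hip => _ _ _ h; apply: h. Qed.

Lemma expand w t d : ip (w + t *: d) (w + t *: d) =
  ip w w + (t * ip d w + sconj t * sconj (ip d w)) + t * sconj t * ip d d.
Proof.
rewrite !ipDl !ipDr !ipZl !ipZr [ip w d]ipC. ring.
Qed.

Definition nr v := re (ip v v).
Lemma emb_nr v : emb b (nr v) = ip v v.
Proof. by rewrite /nr emb_re // ip_ge0. Qed.
Lemma nr_ge0 v : 0 <= nr v.
Proof. by rewrite -(emb_le b) emb0 emb_nr ip_ge0. Qed.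

Lemma ip_ext a c : (forall u, ip u a = ip u c) -> a = c.
Proof.
move=> h; apply/eqP; rewrite -subr_eq0; apply/eqP/ip_eq0.
by rewrite ipBr h subrr.
Qed.

Lemma pos_emb (e : scal R b) : 0 < e -> exists r, 0 < r /\ e = emb b r.
Proof.
move=> e0; exists (re e); rewrite emb_re ?ltW //; split => //.
by rewrite -(emb_lt b) emb_re ?ltW // emb0.
Qed.

Lemma nat_inv_pos n : 0 < (n.+1%:R : R)^-1.
Proof. by rewrite invr_gt0 ltr0Sn. Qed.

Lemma eps_small (e : R) : 0 < e -> exists N, forall n, (N <= n)%N -> 4 * (n.+1%:R)^-1 < e.
Proof.
move=> e0; exists (Num.truncn (4 / e)) => n hn.
have h1 := truncnS_gt (4 / e).
have h2 : ((Num.truncn (4 / e)).+1%:R : R) <= n.+1%:R by rewrite ler_nat ltnS.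
have h3 : 4 / e < n.+1%:R by apply: lt_le_trans h2.
rewrite ltr_pdivrMr ?ltr0Sn //; rewrite ltr_pdivrMr // in h3.
by rewrite mulrC.
Qed.

Hypothesis hc : ip_complete ip.

Lemma dense_lemma (D : V -> Prop) (D0 : D 0)
  (DC : forall a x y, D x -> D y -> D (a *: x + y))
  (P : forall z, (forall d, D d -> ip d z = 0) -> z = 0) : densely_defined ip D.
Proof.
have DD x y : D x -> D y -> D (x + y) by move=> *; rewrite -[x]scale1r; apply: DC.
have DZ a x : D x -> D (a *: x) by move=> *; rewrite -[_ *: _]addr0; apply: DC.
move=> x e e0.
pose A : set R := fun r : R => exists2 d, D d & r = nr (x - d).
have hinf : has_inf A.
  split; first by exists (nr (x - 0)), 0.
  by exists 0 => r [d _ ->]; exact: nr_ge0.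
pose m := inf A.
have mlb d : D d -> m <= nr (x - d) by move=> Dd; have h := ge_inf hinf.2; apply: h; exists d.
have seq n : exists dn, D dn /\ nr (x - dn) < m + (n.+1%:R)^-1.
  by have [r [d Dd ->] lt] := inf_adherent (nat_inv_pos n) hinf; exists d.
have [dd hdd] := boolp.choice seq.
have cauchy n k : nr ((x - dd n) - (x - dd k)) < 2 * (n.+1%:R)^-1 + 2 * (k.+1%:R)^-1.
  pose mid := 2^-1 *: (dd n + dd k).
  have Dmid : D mid by apply/DZ/DD; [exact: (hdd n).1 | exact: (hdd k).1].
  have e1 : (x - dd n) + (x - dd k) = 2 *: (x - mid).
    rewrite /mid scalerBr scalerA divff ?pnatr_eq0 // scale1r scaler_nat.
    by rewrite mulr2n opprD addrACA.
  have e2 : ip ((x - dd n) - (x - dd k)) ((x - dd n) - (x - dd k)) + 4%:R * ip (x - mid) (x - mid)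
     = 2%:R * ip (x - dd n) (x - dd n) + 2%:R * ip (x - dd k) (x - dd k).
    have -> : 4%:R * ip (x - mid) (x - mid) = ip ((x - dd n) + (x - dd k)) ((x - dd n) + (x - dd k)).
      by rewrite e1 ipZl ipZr -(emb_nat b 2) sconj_emb emb_nat; ring.
    have -> : (x - dd n) - (x - dd k) = (x - dd n) + (-1) *: (x - dd k) by rewrite scaleN1r.
    have -> : (x - dd n) + (x - dd k) = (x - dd n) + 1 *: (x - dd k) by rewrite scale1r.
    by rewrite !expand sconjN sconj1; ring.
  rewrite -!emb_nr -!(emb_nat b) -!embM -!embD in e2; move/emb_inj in e2.
  have := (hdd n).2; have := (hdd k).2; have := mlb mid Dmid; move: e2. move: (n.+1%:R^-1) (k.+1%:R^-1) (nr (x - dd n - (x - dd k))) (nr (x - mid)) (nr (x - dd n)) (nr (x - dd k)) => a c u1 u2 u3 u4. lra.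
have [l hl] : exists l, forall e, 0 < e -> exists N, forall n, (N <= n)%N ->
    ip (x - dd n - l) (x - dd n - l) < e.
  apply: hc => e' e'0.
  have [r0 [r00 er0]] := @pos_emb e' e'0.
  have [N hN] := eps_small _ r00.
  exists N => p q hp hq; rewrite er0 -emb_nr emb_lt.
  have := cauchy p q; have := hN p hp; have := hN q hq.
  move: (p.+1%:R^-1) (q.+1%:R^-1) (nr _) => a c u; lra.
have orth : forall d0, D d0 -> ip d0 l = 0.
  move=> d0 Dd0; pose g := ip d0 l; pose q := re (g * sconj g).
  have eq : emb b q = g * sconj g by rewrite emb_re // mul_conj_ge0.
  have q0 : 0 <= q by rewrite -(emb_le b) emb0 eq mul_conj_ge0.
  pose nd := nr d0; have nd0 : 0 <= nd := nr_ge0 d0.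
  have key s n : 0 < s ->
      m <= nr (x - dd n) + nr (x - dd n - l) - 2 * s * q + 2 * s * s * q * nd.
    move=> s0; pose t := - (emb b s * sconj g).
    have I1 : emb b m <= ip (x - dd n + t *: d0) (x - dd n + t *: d0).
      rewrite -emb_nr emb_le.
      have -> : x - dd n + t *: d0 = x - ((- t) *: d0 + dd n).
        by rewrite scaleNr opprD opprK addrA addrAC.
      by apply: mlb; apply: DC => //; exact: (hdd n).1.
    have I2 : 0 <= ip (x - dd n - l + (- t) *: d0) (x - dd n - l + (- t) *: d0) := ip_ge0 _.
    rewrite expand in I1; rewrite expand in I2.
    have ce : ip d0 (x - dd n) = ip d0 (x - dd n - l) + g by rewrite /g -ipDr subrK.
    have H := lerD I1 I2; rewrite addr0 in H.
    rewrite -(emb_le b); apply: (le_trans H); rewrite le_eqVlt; apply/predU1P; left.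
    rewrite /nd !(embD, embM, embN, emb_nat, emb1) !emb_nr eq ce /t.
    rewrite !(sconjN, sconjM, sconj_emb, sconjK, sconjD).
    ring.
  have bound s : 0 < s -> 2 * s * q <= 2 * s * s * q * nd.
    move=> s0; rewrite leNgt; apply/negP => lt.
    set del := 2 * s * s * q * nd in lt.
    set gam := 2 * s * q in lt.
    have dpos : 0 < (gam - del) / 2 by rewrite divr_gt0 // subr_gt0.
    have gd : 0 < gam - del by rewrite subr_gt0.
    have [N1 hN1] := eps_small _ gd.
    have hpos : 0 < emb b ((gam - del) / 2) by rewrite -emb0 emb_lt.
    have [N2 hN2] := hl _ hpos.
    pose n := maxn N1 N2.
    have := hN1 n (leq_maxl _ _); have := hN2 n (leq_maxr _ _).
    rewrite -emb_nr emb_lt.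
    have := key s n s0; have := (hdd n).2; have := nat_inv_pos n.
    rewrite -/del -/gam.
    move: (n.+1%:R^-1) (nr (x - dd n)) (nr (x - dd n - l)) => a u1 u2; lra.
  pose s := (nd + 1)^-1.
  have s0 : 0 < s by rewrite invr_gt0; lra.
  have snd : s * nd < 1.
    by rewrite /s mulrC ltr_pdivrMr ?mul1r; lra.
  have qz : q = 0.
    apply/eqP; rewrite eq_le q0 andbT.
    have hb := bound s s0.
    have pos : 0 < 2 * s * (1 - s * nd) by apply: mulr_gt0; [apply: mulr_gt0 => //|]; lra.
    rewrite -(pmulr_lle0 _ pos).
    have -> : q * (2 * s * (1 - s * nd)) = 2 * s * q - 2 * s * s * q * nd by ring.
    by rewrite subr_le0.
  apply: (@mul_conj_eq0 b); by rewrite -eq qz emb0.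
have l0 : l = 0 := P _ orth.
have [N hN] := hl e e0.
exists (dd N); first exact: (hdd N).1.
by have := hN N (leqnn N); rewrite l0 subr0.
Qed.

End S.
Arguments ipC {R b V ip} hip x y.
Arguments ip0r {R b V ip} hip z.
Arguments ip_ext {R b V ip} hip a c.
Arguments dense_lemma {R b V ip} hip hc D.

Theorem corollary3p5 (R : realType) (is_complex : bool)
    (H K : lmodType (scal R is_complex))
    (ipH : H -> H -> scal R is_complex) (ipK : K -> K -> scal R is_complex)
    (hH : hilbert ipH) (hK : hilbert ipK)
    (DS : H -> Prop) (S : H -> K) (DT : K -> Prop) (T : K -> H)
    (linS : linear_operator DS S) (linT : linear_operator DT T)
    (surjS : op_surjective DS S) (surjT : op_surjective DT T)
    (hST : forall (x : H) (y : K), DS x -> DT y -> ipK (S x) y = ipH x (T y)) :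
  [/\ densely_defined ipH DS, densely_defined ipK DT,
      is_adjoint ipH ipK DS S DT T & is_adjoint ipK ipH DT T DS S].
Proof.
case: hH => hipH hcH; case: hK => hipK hcK.
case: linS => S0D SDC Slin; case: linT => T0D TDC Tlin.
have S0 : S 0 = 0.
  have h := Slin 1 0 0 S0D S0D; rewrite !scale1r addr0 in h.
  by apply: (addIr (S 0)); rewrite add0r -h.
have T0 : T 0 = 0.
  have h := Tlin 1 0 0 T0D T0D; rewrite !scale1r addr0 in h.
  by apply: (addIr (T 0)); rewrite add0r -h.
split.
- apply: (dense_lemma hipH hcH DS S0D SDC) => z hz.
  have [y Dy yz] := surjT z; subst z.
  suff -> : y = 0 by [].
  apply: (ip_ext hipK) => u; have [x' Dx' <-] := surjS u.
  by rewrite hST // hz // (ip0r hipK).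
- apply: (dense_lemma hipK hcK DT T0D TDC) => z hz.
  have [x Dx xz] := surjS z; subst z.
  suff -> : x = 0 by [].
  apply: (ip_ext hipH) => u; have [y Dy <-] := surjT u.
  by rewrite (ipC hipH) -hST // -(ipC hipK) hz // (ip0r hipH).
- move=> y z; split.
  + move=> h; have [y' Dy' Ty'] := surjT z.
    suff yy : y = y' by rewrite yy.
    apply: (ip_ext hipK) => u; have [x' Dx' <-] := surjS u.
    by rewrite h // hST // Ty'.
  + by case=> Dy <- x Dx; apply: hST.
- move=> x z; split.
  + move=> h; have [x' Dx' Sx'] := surjS z.
    suff xx : x = x' by rewrite xx.
    apply: (ip_ext hipH) => u; have [y Dy <-] := surjT u.
    by rewrite h // -Sx' (ipC hipK) hST // -(ipC hipH).
  + case=> Dx <- y Dy.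
    by rewrite (ipC hipK) hST // -(ipC hipH).
Qed.
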